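(* Let $n\ge 2$. The maximum values of the normalized Graovac-Ghorbani index and of the Graovac-Ghorbani index over the set of all connected bipartite graphs $G$ on $n$ vertices are $$\mathrm{NGG}(G) = \sqrt{\lfloor n/2\rfloor \lceil n/2\rceil} \quad\text{and}\quad \mathrm{GG}(G) = \sqrt{(n-2)\lfloor n/2\rfloor \lceil n/2\rceil},$$ respectively, and each of these values is achieved if and only if $G$ is the complete bipartite graph $K_{\lfloor n/2\rfloor, \lceil n/2\rceil}$.
   Context: All graphs are finite, simple, undirected and connected. For an edge $uv$ of a graph $G$, let $n_u = |\{w \in V(G) : d(w,u) < d(w,v)\}|$ and $n_v = |\{w \in V(G) : d(w,v) < d(w,u)\}|$, where $d$ is the shortest-path distance. The Graovac-Ghorbani index is $\mathrm{GG}(G) = \sum_{uv \in E(G)} \sqrt{\frac{n_u + n_v - 2}{n_u n_v}}$ and the normalized Graovac-Ghorbani index is $\mathrm{NGG}(G) = \sum_{uv \in E(G)} \frac{1}{\sqrt{n_u n_v}}$. *)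

(* Defs.v *)
From mathcomp Require Import all_boot all_order all_algebra.
Set Implicit Arguments. Unset Strict Implicit. Unset Printing Implicit Defensive.
Import Order.TTheory GRing.Theory Num.Theory.

Section GG.
Variable n : nat.
Implicit Types (e : rel 'I_n) (u v w : 'I_n).

Definition simple_graph e : Prop :=
  symmetric e /\ irreflexive e.

Definition connected_graph e : Prop := forall u v, connect e u v.

Definition bipartite_graph e : Prop :=
  exists f : 'I_n -> bool, forall u v, e u v -> f u != f v.

Fixpoint walk e (k : nat) (x y : 'I_n) : bool :=
  if k is k'.+1 then [exists z, e x z && walk e k' z y] else x == y.

(* shortest-path distance: least k with a walk of length k; in a connected
   graph on n vertices it is < n.  (Returns n if y is unreachable.) *)
Definition dist e (x y : 'I_n) : nat :=
  find (fun k => walk e k x y) (iota 0 n).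

Definition nu e (u v : 'I_n) : nat := #|[set w | dist e w u < dist e w v]|.

Local Open Scope ring_scope.

(* sums over unordered edges {u,v}, indexed by u < v *)
Definition NGG (R : rcfType) e : R :=
  \sum_(u : 'I_n) \sum_(v : 'I_n | (u < v)%N && e u v)
     (Num.sqrt ((nu e u v)%:R * (nu e v u)%:R))^-1.

Definition GG (R : rcfType) e : R :=
  \sum_(u : 'I_n) \sum_(v : 'I_n | (u < v)%N && e u v)
     Num.sqrt (((nu e u v)%:R + (nu e v u)%:R - 2) /
               ((nu e u v)%:R * (nu e v u)%:R)).

Definition is_complete_bipartite_half e : Prop :=
  exists A : {set 'I_n}, #|A| = n./2 /\
    forall u v, e u v = ((u \in A) != (v \in A)).

End GG.

(* Main.v *)
Require Import Defs.
From mathcomp Require Import all_boot all_order all_algebra.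
Import Order.TTheory GRing.Theory Num.Theory.
From mathcomp Require Import all_boot all_order all_algebra.
Import Order.TTheory GRing.Theory Num.Theory.
Set Implicit Arguments. Unset Strict Implicit. Unset Printing Implicit Defensive.

From mathcomp Require Import zify.
From mathcomp Require Import ring lra.
Lemma halfs n : n./2 + uphalf n = n /\ (uphalf n = n./2 \/ uphalf n = n./2.+1).
Proof.
have h1 := odd_double_half n; have h2 := uphalf_half n.
rewrite -addnn in h1. case: (odd n) h1 h2 => /= h1 h2; lia.
Qed.
Lemma kbound n k : k <= n -> k * (n - k) <= n./2 * uphalf n /\
  (k * (n - k) = n./2 * uphalf n -> k = n./2 \/ k = uphalf n).
Proof.
move=> kn; have [s t] := halfs n.
set a := n./2 in s t *; set b := uphalf n in s t *.
have e : n - k = a + b - k by lia.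
rewrite e; clear e.
have km : k + (a + b - k) = a + b by lia.
move: (a + b - k) km => m km; clearbody a b.
have [j [hj|hj]] : exists j, k = a + j \/ a = k + j.
- case: (leqP a k) => h; [exists (k - a); left | exists (a - k); right]; lia.
- subst k; move: kn km; case: t => ->;
  case: j => [|[|j]] => kn km; split; try lia; nia.
- subst a; move: kn km s; case: t => ->;
  case: j => [|j] => kn km s; split; try lia; nia.
Qed.

Section Graph.
Variable n : nat.
Variable e : rel 'I_n.
Hypothesis esym : symmetric e.
Hypothesis eirr : irreflexive e.
Hypothesis econ : connected_graph e.
Variable f : 'I_n -> bool.
Hypothesis fbip : forall u v, e u v -> f u != f v.

Lemma walk_cat k x y z : walk e k x y -> e y z -> walk e k.+1 x z.
Proof.
elim: k x => [|k IH] x /=.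
  move/eqP=> -> yz; apply/existsP; exists z; by rewrite yz /=.
case/existsP=> w /andP [xw wy] yz; apply/existsP; exists w.
by rewrite xw /=; apply: IH.
Qed.

Lemma walk_parity k x y : walk e k x y -> f y = f x (+) odd k.
Proof.
elim: k x => [|k IH] x /=; first by move/eqP->; rewrite addbF.
case/existsP=> z /andP [xz zy]; rewrite (IH _ zy).
by move: (fbip xz); case: (f x); case: (f z); case: (odd k).
Qed.

Lemma dist_le k x y : walk e k x y -> (dist e x y <= k)%N.
Proof.
rewrite /dist => w; case: (ltnP k n) => hk.
  rewrite leqNgt; apply/negP => /(before_find 0).
  by rewrite nth_iota // add0n w.
by apply: leq_trans (find_size _ _) _; rewrite size_iota.
Qed.

Lemma path_walk p x : path e x p -> walk e (size p) x (last x p).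
Proof.
elim: p x => [|z p IH] x /=; first by rewrite eqxx.
case/andP=> xz pz; apply/existsP; exists z; rewrite xz /=; exact: IH.
Qed.

Lemma dist_walk x y : walk e (dist e x y) x y /\ (dist e x y < n)%N.
Proof.
have [p pp ->] := connectP (econ x y).
case: (shortenP pp) => p' pp' up' _.
have hs : (size p' < n)%N.
  have := uniq_leq_size up' (s2 := enum 'I_n) (fun z _ => mem_enum _ z).
  by rewrite size_enum_ord.
have hh : has (fun k => walk e k x (last x p')) (iota 0 n).
  apply/hasP; exists (size p'); first by rewrite mem_iota.
  exact: path_walk.
have := nth_find 0 hh; rewrite -/(dist e x (last x p')) => hw.
move: hh; rewrite has_find size_iota -/(dist e x (last x p')) => hlt.
by move: hw; rewrite nth_iota // add0n.
Qed.

Lemma dist_eq0 x y : (dist e x y == 0)%N = (x == y).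
Proof.
apply/eqP/eqP.
  by move=> h; have [w _] := dist_walk x y; move: w; rewrite h => /eqP.
move=> ->; apply/eqP; rewrite -leqn0; apply: (@dist_le 0) => /=; exact: eqxx.
Qed.

Lemma dist_edge x y : e x y -> dist e x y = 1%N.
Proof.
move=> xy; apply/eqP; rewrite eqn_leq; apply/andP; split.
  apply: (@dist_le 1) => /=; apply/existsP; exists y; by rewrite xy eqxx.
rewrite lt0n dist_eq0; apply/eqP=> h; move: xy; by rewrite h eirr.
Qed.

Lemma dist_neq w u v : e u v -> dist e w u != dist e w v.
Proof.
move=> uv; apply/negP=> /eqP h.
have [wu _] := dist_walk w u; have [wv _] := dist_walk w v.
move: (fbip uv); by rewrite (walk_parity wu) (walk_parity wv) h eqxx.
Qed.

Lemma nu_sum u v : e u v -> (nu e u v + nu e v u)%N = n.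
Proof.
move=> uv; rewrite /nu.
have -> : [set w | (dist e w v < dist e w u)%N] = ~: [set w | (dist e w u < dist e w v)%N].
  apply/setP=> w; rewrite !inE; have := dist_neq w uv.
  by move=> h; rewrite ltnNge leq_eqVlt (negbTE h).
by rewrite cardsC card_ord.
Qed.

Definition deg u := #|[set w | e u w]|.

Lemma nu_ge u v : e u v -> (deg u <= nu e u v)%N.
Proof.
move=> uv.
have hc : #|u |: ([set w | e u w] :\ v)| = deg u.
  rewrite cardsU1 /deg (cardsD1 v [set w | e u w]) !inE eirr uv /=.
  by rewrite andbF.
rewrite -hc /nu; apply: subset_leq_card; apply/subsetP=> w.
rewrite !inE; case/orP.
  move/eqP->; rewrite (dist_edge uv).
  by have /eqP -> : (dist e u u == 0)%N by rewrite dist_eq0.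
case/andP=> wv uw; rewrite (dist_edge (y:=u)); last by rewrite esym.
have h1 := dist_neq w uv; rewrite (dist_edge (y:=u)) in h1; last by rewrite esym.
have h0 : (dist e w v != 0)%N by rewrite dist_eq0.
by move: h1 h0; case: (dist e w v) => [|[|k]].
Qed.

Lemma nu_complete (A : {set 'I_n}) u v :
  (forall x y, e x y = ((x \in A) != (y \in A))) ->
  e u v -> nu e u v = deg u.
Proof.
move=> Hc uv; apply/eqP; rewrite eqn_leq nu_ge // andbT.
have hc : #|u |: ([set w | e u w] :\ v)| = deg u.
  rewrite cardsU1 /deg (cardsD1 v [set w | e u w]) !inE eirr uv /=.
  by rewrite andbF.
rewrite -hc /nu; apply: subset_leq_card; apply/subsetP=> w.
rewrite !inE => hw.
have [wu0|wu] := eqVneq w u; first by [].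
rewrite /=. case uw: (e u w).
  rewrite andbT; apply/eqP=> wv; move: hw; rewrite wv.
  by have /eqP -> : (dist e v v == 0)%N by rewrite dist_eq0.
exfalso.
have wv : e w v.
  move: uw uv; rewrite !Hc; by case: (u \in A); case: (w \in A); case: (v \in A).
move: hw; rewrite (dist_edge wv) ltnS leqn0 dist_eq0; by apply/negP; rewrite wu.
Qed.

Lemma deg_pos u : (1 < n)%N -> (0 < deg u)%N.
Proof.
move=> hn.
have hk : ((if val u == 0%N then 1 else 0) < n)%N.
  by case: ifP => _ //; apply: leq_trans hn.
pose v : 'I_n := Ordinal hk.
have vu : v != u.
  apply/negP=> /eqP/(congr1 val) /=.
  by case: eqP => [->|h] //= h0; apply: h; rewrite -h0.
have [p pp ev] := connectP (econ u v).
case: p pp ev => [|z p] /=; first by move=> _ h; move: vu; rewrite h eqxx.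
case/andP=> uz _ _; apply/card_gt0P; exists z; by rewrite inE.
Qed.


Definition m2 := (\sum_u deg u)%N.
Definition Af := [set u | f u].

Lemma deg_le u : (deg u <= (if f u then #|~: Af| else #|Af|))%N.
Proof.
rewrite /deg; case fu: (f u); apply: subset_leq_card; apply/subsetP=> w;
  rewrite !inE => uw; have := fbip uw; by rewrite fu; case: (f w).
Qed.

Lemma sum_const_dep (P : pred 'I_n) c : (\sum_(i | P i) c)%N = (#|[set i | P i]| * c)%N.
Proof.
rewrite -sum1dep_card big_distrl /=; apply: eq_bigr => *; by rewrite mul1n.
Qed.

Lemma sum_bnd : (\sum_u (if f u then #|~: Af| else #|Af|))%N = (2 * (#|Af| * #|~: Af|))%N.
Proof.
rewrite (bigID (fun u => f u)) /=.
rewrite (eq_bigr (fun _ => #|~: Af|)); last by move=> i ->.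
rewrite [X in (_ + X)%N](eq_bigr (fun _ => #|Af|)); last by move=> i /negbTE ->.
rewrite !sum_const_dep.
have -> : [set i | f i] = Af by [].
have -> : [set i | ~~ f i] = ~: Af by apply/setP=> i; rewrite !inE.
by rewrite mulnC mul2n addnn.
Qed.

Lemma m2_bound : (m2 <= 2 * (n./2 * uphalf n))%N /\ (m2 = (2 * (n./2 * uphalf n))%N -> is_complete_bipartite_half e).
Proof.
have hle : (m2 <= \sum_u (if f u then #|~: Af| else #|Af|))%N.
  by apply: leq_sum => u _; apply: deg_le.
have hC : #|~: Af| = (n - #|Af|)%N.
  by move: (cardsC Af); rewrite card_ord; lia.
have hA : (#|Af| <= n)%N by move: (cardsC Af); rewrite card_ord; lia.
have [kb keq] := kbound hA.
have hs : (\sum_u (if f u then #|~: Af| else #|Af|))%N = (2 * (#|Af| * (n - #|Af|)))%N.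
  by rewrite sum_bnd hC.
split; first by lia.
move=> hm.
have hsum : (\sum_u (if f u then #|~: Af| else #|Af|))%N = m2 by lia.
have hk : (#|Af| * (n - #|Af|))%N = (n./2 * uphalf n)%N by lia.
have h0 : (\sum_u ((if f u then #|~: Af| else #|Af|) - deg u) == 0)%N.
  by rewrite sumnB ?hsum ?subnn // => u _; apply: deg_le.
have hdeg : forall u, deg u = (if f u then #|~: Af| else #|Af|).
  move: h0; rewrite sum_nat_eq0 => /forallP h u; move: (h u) (deg_le u).
  rewrite implyTb; lia.
have hN : forall u, [set w | e u w] = if f u then ~: Af else Af.
  move=> u; apply/eqP; rewrite eqEcard; apply/andP; split; last first.
    by rewrite -/(deg u) hdeg; case: (f u).
  case fu: (f u); apply/subsetP=> w;
  rewrite !inE => uw; have := fbip uw; by rewrite fu; case: (f w).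
have he : forall u v, e u v = ((u \in Af) != (v \in Af)).
  move=> u v; have := hN u; move/setP/(_ v); rewrite !inE => ->.
  by case: (f u); rewrite !inE //; case: (f v).
case: (keq hk) => hA'.
  by exists Af; split.
exists (~: Af); split.
  rewrite hC hA'; have [s _] := halfs n; lia.
by move=> u v; rewrite he !in_setC; case: (u \in Af); case: (v \in Af).
Qed.

Variable R : rcfType.
Hypothesis hn : (1 < n)%N.
Local Open Scope ring_scope.

Definition X u v : R := (Num.sqrt ((nu e u v)%:R * (nu e v u)%:R))^-1.

Lemma swap_sum (Q : rel 'I_n) (F : 'I_n -> 'I_n -> R) :
  \sum_u \sum_(v | Q u v) F u v = \sum_u \sum_(v | Q v u) F v u.
Proof.
under eq_bigr do rewrite big_mkcond.
rewrite exchange_big /=; apply: eq_bigr => u _; by rewrite [RHS]big_mkcond.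
Qed.

Lemma half_sum (F : 'I_n -> 'I_n -> R) : (forall u v, F u v = F v u) ->
  \sum_u \sum_(v | e u v) F u v = 2 * \sum_(u : 'I_n) \sum_(v : 'I_n | (u < v)%N && e u v) F u v.
Proof.
move=> Fs.
have hs : forall u, \sum_(v | e u v) F u v =
   \sum_(v : 'I_n | (u < v)%N && e u v) F u v + \sum_(v : 'I_n | (v < u)%N && e u v) F u v.
  move=> u; rewrite (bigID (fun v : 'I_n => (u < v)%N)) /=; congr (_ + _); apply: eq_bigl => v.
    by rewrite andbC.
  case uv: (e u v); rewrite ?andbF //= andbT -leqNgt leq_eqVlt.
  case: eqP => [/val_inj vu|//]; by move: uv; rewrite vu eirr.
rewrite (eq_bigr _ (fun u _ => hs u)) big_split /= (swap_sum (fun u v : 'I_n => (v < u)%N && e u v)) /=.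
rewrite mulr_natl mulr2n; congr (_ + _); apply: eq_bigr => u _.
rewrite big_mkcond [RHS]big_mkcond; apply: eq_bigr => v _; by rewrite esym Fs.

Qed.

Lemma NGG2 : 2 * NGG R e = \sum_u \sum_(v | e u v) X u v.
Proof. by rewrite half_sum // => u v; rewrite /X mulrC. Qed.

Lemma nu_pos u v : e u v -> (0 < nu e u v)%N.
Proof.
move=> uv; apply: leq_trans (nu_ge uv).
by apply/card_gt0P; exists v; rewrite inE.
Qed.

Lemma sum_const_dep_R (P : pred 'I_n) (c : R) :
  \sum_(i | P i) c = c *+ #|[set i | P i]|.
Proof. rewrite -sumr_const; apply: eq_bigl => i; by rewrite inE. Qed.

Lemma X2 u v : e u v -> X u v ^+ 2 =
  (n%:R)^-1 * (((nu e u v)%:R)^-1 + ((nu e v u)%:R)^-1).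
Proof.
move=> uv; rewrite /X exprVn sqr_sqrtr ?mulr_ge0 ?ler0n //.
have -> : n%:R = (nu e u v)%:R + (nu e v u)%:R :> R by rewrite -natrD nu_sum.
have hp : (nu e u v)%:R != 0 :> R by rewrite pnatr_eq0 -lt0n nu_pos.
have hq : (nu e v u)%:R != 0 :> R by rewrite pnatr_eq0 -lt0n nu_pos // esym.
have hpq : (nu e u v)%:R + (nu e v u)%:R != 0 :> R.
  by rewrite -natrD pnatr_eq0 addn_eq0 negb_and -!lt0n nu_pos.
by field; rewrite hp hq hpq.
Qed.

Lemma sumX2 : \sum_u \sum_(v | e u v) X u v ^+ 2 <= 2.
Proof.
under eq_bigr do under eq_bigr => v uv do rewrite (X2 uv).
under eq_bigr do rewrite -mulr_sumr big_split /=.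
rewrite -mulr_sumr big_split /=.
have hsw : \sum_u \sum_(v | e u v) ((nu e v u)%:R)^-1 =
    \sum_u \sum_(v | e u v) ((nu e u v)%:R)^-1 :> R.
  rewrite swap_sum; apply: eq_bigr => u _; apply: eq_bigl => v; by rewrite esym.
rewrite hsw.
have hn0 : 0 < n%:R :> R by rewrite ltr0n; apply: leq_trans hn.
have hS : \sum_u \sum_(v | e u v) ((nu e u v)%:R)^-1 <= n%:R :> R.
  apply: (@le_trans _ _ (\sum_(u : 'I_n) (1:R))); last first.
    by rewrite sumr_const card_ord.
  apply: ler_sum => u _.
  apply: (@le_trans _ _ (\sum_(v | e u v) ((deg u)%:R)^-1)).
    apply: ler_sum => v uv; rewrite lef_pV2 ?posrE ?ltr0n ?nu_pos ?ler_nat //.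
      exact: nu_ge.
    by apply/card_gt0P; exists v; rewrite inE.
  rewrite sum_const_dep_R -/(deg u).
  have -> : forall x : R, x *+ deg u = x * (deg u)%:R by move=> x; rewrite mulr_natr.
  have [->|d0] := eqVneq (deg u) 0%N; first by rewrite mulr0 ler01.
  by rewrite mulVf ?pnatr_eq0.
apply: (@le_trans _ _ (n%:R^-1 * (n%:R + n%:R))).
  by apply: ler_wpM2l; [rewrite invr_ge0 ler0n | apply: lerD].
rewrite mulrDr mulVf ?gt_eqF //; lra.
Qed.

Lemma ab_pos : (0 < n./2)%N /\ (0 < uphalf n)%N.
Proof. have [s t] := halfs n; lia. Qed.

Lemma NGG_bound :
  NGG R e <= Num.sqrt ((n./2)%:R * (uphalf n)%:R) /\
  (NGG R e = Num.sqrt ((n./2)%:R * (uphalf n)%:R) -> is_complete_bipartite_half e).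
Proof.
set c := Num.sqrt _.
have [ha hb] := ab_pos.
have hab : 0 < (n./2)%:R * (uphalf n)%:R :> R by rewrite mulr_gt0 ?ltr0n.
have hc : 0 < c by rewrite sqrtr_gt0.
have hc2 : c ^+ 2 = (n./2)%:R * (uphalf n)%:R by rewrite sqr_sqrtr // ltW.
have hterm : forall u v, 2 * c * X u v <= c ^+ 2 * X u v ^+ 2 + 1.
  move=> u v; rewrite -subr_ge0.
  have -> : c ^+ 2 * X u v ^+ 2 + 1 - 2 * c * X u v = (c * X u v - 1) ^+ 2 by ring.
  exact: sqr_ge0.
have h1 : \sum_u \sum_(v | e u v) (2 * c * X u v) <=
          \sum_u \sum_(v | e u v) (c ^+ 2 * X u v ^+ 2 + 1).
  by apply: ler_sum => u _; apply: ler_sum => v _; apply: hterm.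
have e1 : \sum_u \sum_(v | e u v) (2 * c * X u v) = 2 * c * (2 * NGG R e).
  by rewrite NGG2 mulr_sumr; apply: eq_bigr => u _; rewrite mulr_sumr.
have e2 : \sum_u \sum_(v | e u v) (c ^+ 2 * X u v ^+ 2 + 1) =
          c ^+ 2 * (\sum_u \sum_(v | e u v) X u v ^+ 2) + (m2 %:R).
  rewrite /m2 natr_sum mulr_sumr -big_split; apply: eq_bigr => u _.
  by rewrite big_split /= -mulr_sumr sum_const_dep_R.
rewrite e1 e2 in h1.
have hX := sumX2.
have [m2le m2eq] := m2_bound.
have hM : (m2%:R : R) <= 2 * ((n./2)%:R * (uphalf n)%:R).
  by move: m2le; rewrite -(ler_nat R) !natrM.
have hX' : c ^+ 2 * (\sum_u \sum_(v | e u v) X u v ^+ 2) <= c ^+ 2 * 2.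
  by apply: ler_wpM2l => //; rewrite sqr_ge0.
split.
  rewrite hc2 in hX' h1.
  have h4 : 4 * c * NGG R e <= 4 * c * c.
    have -> : 4 * c * c = 4 * c ^+ 2 by rewrite expr2 mulrA.
    rewrite hc2; lra.
  by rewrite -(ler_pM2l (_ : 0 < 4 * c)) // mulr_gt0.
move=> hN; apply: m2eq; apply/eqP; rewrite eqn_leq m2le /=.
rewrite -(ler_nat R) !natrM.
rewrite hN in h1.
have : 4 * c ^+ 2 <= 2 * c ^+ 2 + m2%:R.
  have -> : 4 * c ^+ 2 = 2 * c * (2 * c) by rewrite expr2; ring.
  lra.
rewrite hc2; lra.
Qed.

Lemma NGG_complete : (forall u v, e u v = (f u != f v)) -> #|Af| = n./2 ->
  NGG R e = Num.sqrt ((n./2)%:R * (uphalf n)%:R).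
Proof.
move=> Hc hA.
set c := Num.sqrt _.
have [ha hb] := ab_pos.
have hab : 0 < (n./2)%:R * (uphalf n)%:R :> R by rewrite mulr_gt0 ?ltr0n.
have hc : 0 < c by rewrite sqrtr_gt0.
have hc2 : c ^+ 2 = (n./2)%:R * (uphalf n)%:R by rewrite sqr_sqrtr // ltW.
have HcA : forall x y, e x y = ((x \in Af) != (y \in Af)) by move=> x y; rewrite !inE Hc.
have hC : #|~: Af| = uphalf n.
  have [s _] := halfs n; move: (cardsC Af); rewrite card_ord hA; lia.
have hdeg : forall u, deg u = if f u then #|~: Af| else #|Af|.
  move=> u; rewrite /deg; case fu: (f u); apply: eq_card => w;
  by rewrite !inE Hc fu; case: (f w).
have hX : forall u v, e u v -> X u v = c^-1.
  move=> u v uv; rewrite /X (nu_complete HcA uv) (nu_complete HcA (v:=u)); last by rewrite esym.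
  rewrite !hdeg hC hA; move: uv; rewrite Hc.
  by case: (f u); case: (f v) => //= _; rewrite mulrC.
have hm2 : m2 = (2 * (n./2 * uphalf n))%N.
  rewrite /m2 (eq_bigr _ (fun u _ => hdeg u)) sum_bnd hA hC //.
have h2 : 2 * NGG R e = c^-1 *+ m2.
  rewrite NGG2 /m2 -sumrMnr; apply: eq_bigr => u _.
  rewrite (eq_bigr (fun _ => c^-1)); last by move=> v uv; rewrite hX.
  by rewrite sum_const_dep_R.
have h3 : c^-1 *+ (2 * (n./2 * uphalf n)) = c^-1 * (2 * c ^+ 2) by rewrite hc2 -!natrM mulr_natr.
move: h2; rewrite hm2 h3.
have hc0 : c != 0 by rewrite gt_eqF.
move=> h2; have : NGG R e = c^-1 * c ^+ 2 by lra.
by rewrite expr2 mulrA mulVf // mul1r.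
Qed.

Lemma GG_NGG : GG R e = Num.sqrt ((n - 2)%:R) * NGG R e.
Proof.
rewrite /GG /NGG mulr_sumr; apply: eq_bigr => u _; rewrite mulr_sumr.
apply: eq_bigr => v /andP [_ uv].
have -> : (nu e u v)%:R + (nu e v u)%:R - 2 = (n - 2)%:R :> R.
  by rewrite natrB // -natrD nu_sum.
by rewrite [LHS]sqrtrM ?ler0n // sqrtrV ?mulr_ge0 ?ler0n.
Qed.

Lemma n2_complete : n = 2%N -> is_complete_bipartite_half e.
Proof.
move=> h2; have [le eq] := m2_bound; apply: eq; apply/eqP; rewrite eqn_leq le /=.
have h : (2 * (n./2 * uphalf n) = n)%N by rewrite h2.
have hm : (\sum_(u : 'I_n) 1 <= m2)%N by apply: leq_sum => u _; apply: deg_pos.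
move: hm; rewrite sum1_card card_ord; lia.
Qed.

End Graph.
Unset Implicit Arguments.
Local Open Scope ring_scope.

Theorem corollary6 (R : rcfType) (n : nat) (hn : (2 <= n)%N) :
  (forall e : rel 'I_n,
     simple_graph e -> connected_graph e -> bipartite_graph e ->
     NGG R e <= Num.sqrt ((n./2)%:R * (uphalf n)%:R) /\
     (NGG R e = Num.sqrt ((n./2)%:R * (uphalf n)%:R) <->
        is_complete_bipartite_half e)) /\
  (forall e : rel 'I_n,
     simple_graph e -> connected_graph e -> bipartite_graph e ->
     GG R e <= Num.sqrt ((n - 2)%:R * (n./2)%:R * (uphalf n)%:R) /\
     (GG R e = Num.sqrt ((n - 2)%:R * (n./2)%:R * (uphalf n)%:R) <->
        is_complete_bipartite_half e)).
Proof.
have hn1 : (1 < n)%N := hn.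
have main : forall e : rel 'I_n,
     simple_graph e -> connected_graph e -> bipartite_graph e ->
     NGG R e <= Num.sqrt ((n./2)%:R * (uphalf n)%:R) /\
     (NGG R e = Num.sqrt ((n./2)%:R * (uphalf n)%:R) <->
        is_complete_bipartite_half e).
  move=> e [esym eirr] econ [f fbip].
  have [b1 b2] := NGG_bound esym eirr econ fbip R hn1.
  split => //; split => // [[A [hA Hc]]].
  have fb' : forall u v, e u v -> (u \in A) != (v \in A) by move=> u v; rewrite Hc.
  apply: (NGG_complete esym eirr econ fb' R hn1 Hc).
  rewrite /Af; have -> : [set u | u \in A] = A by apply/setP=> u; rewrite inE.
  exact: hA.
split; first exact: main.
move=> e hs econ hb; have [b1 b2] := main e hs econ hb.
case: hb => f fbip.
rewrite (GG_NGG econ fbip R hn1).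
have -> : Num.sqrt ((n - 2)%:R * (n./2)%:R * (uphalf n)%:R) =
   Num.sqrt ((n - 2)%:R) * Num.sqrt ((n./2)%:R * (uphalf n)%:R) :> R.
  by rewrite -mulrA sqrtrM ?ler0n.
split; first by apply: ler_wpM2l => //; rewrite sqrtr_ge0.
have [h2|h2] := eqVneq n 2%N.
  have -> : (n - 2)%:R = 0 :> R by rewrite h2.
  rewrite sqrtr0 !mul0r; split => // _.
  exact: (n2_complete econ fbip hn1 h2).
have hs0 : Num.sqrt ((n - 2)%:R) != 0 :> R.
  rewrite sqrtr_eq0 -ltNge ltr0n subn_gt0; move: h2 hn => /eqP; lia.
split => [/(mulfI hs0) /b2 // | hc].
by rewrite (proj2 b2 hc).
Qed.
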